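(* Let $(d_i)_{i\ge1}$ be an infinite alternate Lyndon word over the alphabet $\mathcal{A}=\{0,1,\dots,d_1\}$, let $M=M((d_i)_{i\ge1})$ be the associated alternate Lyndon system, and let $H_n$ be the number of words of length $n$ in the language $L_M$ of $M$. Then $H_0=1$ and for all $n\ge1$, $$H_n=\sum_{k=1}^{n}(-1)^k(d_{k-1}-d_k)H_{n-k}+1,$$ with the convention $d_0=0$.
   Context: Alphabets are finite sets $\{0,1,\dots,d\}$ of nonnegative integers with the usual order. Alternate order: for two words $x=x_1x_2\cdots$, $y=y_1y_2\cdots$ (both infinite, or both finite of the same length), $x\prec y$ iff there is $k$ with $x_i=y_i$ for all $i<k$ and $(-1)^k(x_k-y_k)<0$; $x\preceq y$ iff $x=y$ or $x\prec y$. Finite words of different lengths are compared after padding the shorter one on the right with zeros. An alternate Lyndon word is an infinite word $(d_i)_{i\ge1}$ such that $d_1d_2d_3\cdots\preceq d_nd_{n+1}\cdots$ for all $n\ge1$. The alternate Lyndon system $M((d_i)_{i\ge1})$ is the set of infinite words $x_1x_2\cdots$ over the alphabet with $d_1d_2\cdots\preceq x_kx_{k+1}\cdots$ for all $k\ge1$. Its language $L_M$ is the set of finite factors (finite blocks of consecutive letters) of elements of $M$; $H_n$ denotes the number of words of length $n$ in $L_M$, with $H_0=1$. *)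

(* Defs.v *)
From HB Require Import structures.
From mathcomp Require Import all_boot all_order all_algebra.
From Stdlib Require Import ClassicalEpsilon.
Set Implicit Arguments. Unset Strict Implicit. Unset Printing Implicit Defensive.

(* Infinite words are functions nat -> nat, indexed from 1 as in the paper:
   the word x_1 x_2 x_3 ... is represented by x with x i = x_i for i >= 1;
   the value x 0 is irrelevant. *)

Definition asbool (P : Prop) : bool :=
  if excluded_middle_informative P then true else false.

Definition alt_lt (x y : nat -> nat) : Prop :=
  exists k, 0 < k /\ (forall i, 0 < i < k -> x i = y i) /\
    (if odd k then y k < x k else x k < y k).

Definition alt_le (x y : nat -> nat) : Prop :=
  (forall i, 0 < i -> x i = y i) \/ alt_lt x y.

Definition suffix (x : nat -> nat) (n : nat) : nat -> nat :=
  fun i => x (n + i - 1).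

Definition alt_lyndon (d : nat -> nat) : Prop :=
  forall n, 0 < n -> alt_le d (suffix d n).

Definition in_M (d x : nat -> nat) : Prop :=
  (forall i, 0 < i -> x i <= d 1) /\
  (forall k, 0 < k -> alt_le d (suffix x k)).

Definition in_L (d : nat -> nat) (w : seq nat) : Prop :=
  exists x, in_M d x /\
    exists k, 0 < k /\ (forall i, i < size w -> nth 0 w i = x (k + i)).

Definition H (d : nat -> nat) (n : nat) : nat :=
  #|[pred w : n.-tuple 'I_(d 1).+1 | asbool (in_L d (map val w))]|.

Definition dz (d : nat -> nat) (k : nat) : nat := if k is 0 then 0 else d k.

(* Main.v *)
Require Import Defs.
From Stdlib Require Import ClassicalEpsilon.
From HB Require Import structures.
From mathcomp Require Import all_boot all_order all_algebra.
From mathcomp Require Import zify.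
Import GRing.Theory Num.Theory.

Fixpoint altc (f : bool) (x y : seq nat) : bool :=
  match x, y with
  | a :: x', b :: y' => if a == b then altc (~~ f) x' y'
                        else (if f then b < a else a < b)
  | _, _ => false
  end.

Lemma altc_flip f x y : altc (~~ f) x y = altc f y x.
Proof.
elim: x y f => [|a x IH] [|b y] f //=.
rewrite eq_sym; case: eqP => _; first by rewrite IH.
by case: f.
Qed.

Lemma altc_irr f x : altc f x x = false.
Proof. by elim: x f => [|a x IH] f //=; rewrite eqxx IH. Qed.

Lemma altc_trans f x y z : altc f x y -> altc f y z -> altc f x z.
Proof.
elim: x y z f => [|a x IH] [|b y] [|c z] f //=.
case: (eqVneq a b) => Hab; case: (eqVneq b c) => Hbc; case: (eqVneq a c) => Hac;
  subst => //=; rewrite ?eqxx ?(negbTE Hab) ?(negbTE Hbc) ?(negbTE Hac);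
  try (by apply: IH); try (by rewrite eqxx in Hac);
  by case: f => /=; lia.
Qed.

Lemma altc_tri f x y : size x = size y -> [|| altc f x y, altc f y x | x == y].
Proof.
elim: x y f => [|a x IH] [|b y] f //= [] Hs.
rewrite eqseq_cons.
case: (eqVneq a b) => [Hab|Hab] /=; first subst b.
- have := IH y (~~ f) Hs; rewrite !altc_flip.
  by case/or3P => ->; rewrite ?orbT.
- idtac.
  by case: f => /=; lia.
Qed.
Fixpoint seg (x : nat -> nat) (m l : nat) : seq nat :=
  if l is l'.+1 then x m :: seg x m.+1 l' else [::].

Lemma size_seg x m l : size (seg x m l) = l.
Proof. by elim: l m => //= l IH m; rewrite IH. Qed.

Lemma nth_seg x m l i : i < l -> nth 0 (seg x m l) i = x (m + i).
Proof.
elim: l m i => // l IH m [|i] /=; first by rewrite addn0.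
by move=> Hi; rewrite IH //; congr x; lia.
Qed.

Lemma seg_ext x y m m' l : (forall i, i < l -> x (m + i) = y (m' + i)) ->
  seg x m l = seg y m' l.
Proof.
elim: l m m' => //= l IH m m' H.
rewrite -(addn0 m) -(addn0 m') H // !addn0; congr (_ :: _).
apply: IH => i Hi; have := H i.+1 Hi; rewrite !addnS !addSn; exact.
Qed.

Lemma seg_nth w m : seg (fun i => nth 0 w (i - m)) m (size w) = w.
Proof.
apply: (@eq_from_nth _ 0); first by rewrite size_seg.
move=> i; rewrite size_seg => Hi; rewrite nth_seg //; congr nth; lia.
Qed.

Lemma bridge l m x y : 0 < m -> (forall i, 0 < i < m -> x i = y i) ->
  altc (odd m) (seg x m l) (seg y m l) -> alt_lt x y.
Proof.
elim: l m => //= l IH m Hm Hxy.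
case: eqP => [He|Hne].
- rewrite -oddS; apply: IH => // i /andP [Hi1 Hi2].
  case: (ltngtP i m) => Him; [by apply: Hxy; rewrite Hi1 | lia | by subst].
- move=> H; exists m; split; [done|split; [|done]].
  move=> i Hi; apply: Hxy; exact Hi.
Qed.

Lemma alt_lt_le_false x y : alt_lt x y -> alt_le y x -> False.
Proof.
case=> k [Hk [Heq Hlt]] [Hall|[k' [Hk' [Heq' Hlt']]]].
- move: Hlt; rewrite (Hall k Hk); case: (odd k); lia.
- case: (ltngtP k k') => Hkk.
  + move: Hlt; rewrite (Heq' k); last by rewrite Hk.
    case: (odd k); lia.
  + move: Hlt'; rewrite (Heq k'); last by rewrite Hk'.
    case: (odd k'); lia.
  + subst k'; move: Hlt Hlt'; case: (odd k); lia.
Qed.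

Lemma alt_le_ext x y z : alt_le x y -> (forall i, 0 < i -> y i = z i) -> alt_le x z.
Proof.
move=> [H|[k [Hk [Heq Hlt]]]] Hyz.
- by left => i Hi; rewrite H // Hyz.
- right; exists k; split => //; split.
  + by move=> i Hi; rewrite Heq // Hyz //; case/andP: Hi.
  + by rewrite -Hyz.
Qed.
Fixpoint adm (d : nat -> nat) (w : seq nat) : bool :=
  if w is a :: w' then adm d w' && ~~ altc true w (seg d 1 (size w)) else true.

Lemma w_as_seg w f m : (forall i, i < size w -> nth 0 w i = f (m + i)) ->
  w = seg f m (size w).
Proof.
move=> H; apply: (@eq_from_nth _ 0); first by rewrite size_seg.
by move=> i Hi; rewrite nth_seg // H.
Qed.

Lemma seg_suffix x k l : seg x k l = seg (Defs.suffix x k) 1 l.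
Proof. apply: seg_ext => i _; rewrite /Defs.suffix; f_equal; lia. Qed.

Section Lyn.
Variable d : nat -> nat.
Hypothesis hd : alt_lyndon d.

Lemma lyn_fin j l : 0 < j -> ~~ altc true (seg d j l) (seg d 1 l).
Proof.
move=> Hj; apply/negP; rewrite seg_suffix => H.
have Hlt := bridge l 1 (Defs.suffix d j) d isT (fun i Hi => ltac:(lia)) H.
exact: (alt_lt_le_false _ _ Hlt (hd j Hj)).
Qed.

Lemma dle i : 0 < i -> d i <= d 1.
Proof.
move=> Hi; have := lyn_fin i 1 Hi => /=.
case: eqP => [->//|]; lia.
Qed.

Lemma adm_fac j l : 0 < j -> adm d (seg d j l).
Proof.
elim: l j => //= l IH j Hj.
rewrite IH //= size_seg.
by have := lyn_fin j l.+1 Hj.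
Qed.

End Lyn.

Lemma adm_drop d w p : adm d w -> p < size w ->
  ~~ altc true (drop p w) (seg d 1 (size w - p)).
Proof.
elim: w p => //= a w IH [|p] /andP [Hw Hh] Hp.
- by rewrite subn0.
- by rewrite subSS; apply: IH.
Qed.

Lemma adm_head d w : adm d w -> ~~ altc true w (seg d 1 (size w)).
Proof. by case: w => //= a w /andP []. Qed.

Lemma inL_adm d w : in_L d w -> adm d w.
Proof.
case=> x [[Hlet Hsuf] [k [Hk Hw]]].
elim: w k Hk Hw => //= a w IH k Hk Hw.
apply/andP; split.
- apply: (IH k.+1) => // i Hi.
  by have := Hw i.+1 Hi => /= ->; rewrite addSnnS.
- apply/negP => H0.
  have H : altc true (a :: w) (seg d 1 (size (a :: w))) := H0.
  have E := @w_as_seg (a :: w) x k Hw.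
  rewrite E seg_suffix size_seg in H.
  have Hlt := bridge (size w).+1 1 (Defs.suffix x k) d isT (fun i Hi => ltac:(lia)) H.
  exact: (alt_lt_le_false _ _ Hlt (Hsuf k Hk)).
Qed.
Lemma adm_inL d w : alt_lyndon d -> all (fun a => a <= d 1) w -> adm d w -> in_L d w.
Proof.
move=> hd Hall Hadm.
set n := size w.
pose P := fun m => (m <= n) && (drop (n - m) w == seg d 1 m).
have exP : exists i, P i by exists 0; rewrite /P /= subn0 drop_size.
have ubP : forall i, P i -> i <= n by move=> i /andP [].
case: (ex_maxnP exP ubP) => m /andP [Hmn /eqP Hdrop] Hmax.
pose x := fun i => if i <= n - m then nth 0 w (i - 1) else d (i - (n - m)).
have xw : forall i, 0 < i <= n -> x i = nth 0 w (i - 1).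
  move=> i /andP [Hi1 Hi2]; rewrite /x; case: ifP => // Hi.
  have -> : i - 1 = n - m + (i - 1 - (n - m)) by lia.
  rewrite -nth_drop Hdrop nth_seg; last by lia.
  f_equal; lia.
have nthle : forall j, nth 0 w j <= d 1.
  move=> j; case: (ltnP j (size w)) => Hj.
  - exact: (all_nthP 0 Hall).
  - by rewrite nth_default.
exists x; split; last first.
  exists 1; split => // i Hi; rewrite xw; [f_equal; lia | lia].
split.
- move=> i Hi; rewrite /x; case: ifP => H; first exact: nthle.
  apply: (dle d hd); rewrite /n in H *; lia.
- move=> k Hk; case: (leqP k (n - m)) => Hkm.
  + set p := k - 1.
    have Hp : p < size w by rewrite /p; lia.
    have Hnd := adm_drop d w p Hadm Hp.
    have Hneq : drop p w != seg d 1 (size w - p).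
      apply/negP => /eqP He.
      have : P (size w - p) by rewrite /P -/n; apply/andP; split; [lia|];
        rewrite -He; apply/eqP; f_equal; rewrite /n; lia.
      move/Hmax; rewrite /n; lia.
    have Hsz : size (seg d 1 (size w - p)) = size (drop p w) by rewrite size_seg size_drop.
    have := altc_tri true _ _ Hsz; rewrite (negbTE Hnd) eq_sym (negbTE Hneq) orbF /= => Hlt.
    have Eu : drop p w = seg (Defs.suffix x k) 1 (size w - p).
      rewrite -seg_suffix.
      have -> : size w - p = size (drop p w) by rewrite size_drop.
      apply: w_as_seg => i; rewrite size_drop => Hi.
      rewrite nth_drop xw; [f_equal; rewrite /p; lia | rewrite /n; lia].
    rewrite Eu orbF in Hlt.
    right; exact: (bridge _ 1 d (Defs.suffix x k) isT (fun i Hi => ltac:(lia)) Hlt).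
  + apply: (alt_le_ext _ _ _ (hd (k - (n - m)) _)); first lia.
    move=> i Hi; rewrite /Defs.suffix /x; case: ifP => H; first lia.
    f_equal; lia.
Qed.
Fixpoint W (k n : nat) : seq (seq nat) :=
  if n is n'.+1 then flatten [seq [seq a :: w | w <- W k n'] | a <- iota 0 k]
  else [:: [::]].

Lemma countW k n (P : pred (seq nat)) :
  count P (W k n.+1) = \sum_(a < k) count (fun w : seq nat => P (nat_of_ord a :: w)) (W k n).
Proof.
rewrite /= count_flatten sumnE big_map.
rewrite -(big_mkord xpredT (fun a : nat => count (fun w : seq nat => P (a :: w)) (W k n))).
rewrite /index_iota subn0 big_map; apply: eq_bigr => a _; by rewrite count_map.
Qed.

Lemma card_count k n (P : pred (seq nat)) :
  #|[pred t : n.-tuple 'I_k | P (map val t)]| = count P (W k n).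
Proof.
elim: n P => [|n IH] P.
- rewrite /= addn0.
  case HP: (P [::]).
  + rewrite (eq_card (B := pred1 [tuple])); first by rewrite card1.
    move=> t; rewrite tuple0 inE /= HP; apply/esym/eqP; done.
  + apply: eq_card0 => t; rewrite tuple0 !inE; exact: HP.
- rewrite countW -sum1_card big_mkcond /=.
  pose f := fun p : 'I_k * n.-tuple 'I_k => [tuple of p.1 :: p.2].
  have bij : bijective f.
    exists (fun t : n.+1.-tuple 'I_k => (thead t, [tuple of behead t])).
    + by case=> a t; rewrite /f /=; congr pair; apply: val_inj.
    + by move=> t; rewrite /f /= [RHS]tuple_eta.
  rewrite (reindex f); last by apply: onW_bij.
  rewrite -(pair_big xpredT xpredT (fun a t => if f (a, t) \in [pred t : n.+1.-tuple 'I_k | P (map val t)] then 1 else 0)) /=.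
  apply: eq_big => // a _.
  rewrite -(IH (fun w => P (val a :: w))) -sum1_card [RHS]big_mkcond /=.
  by apply: eq_bigr => t _; rewrite !inE.
Qed.
Lemma asboolE (P : Prop) (b : bool) : (P <-> b) -> asbool P = b.
Proof.
move=> HP; rewrite /asbool; case: excluded_middle_informative => H.
- by apply/esym; apply/HP.
- by case: b HP => // HP; exfalso; apply: H; apply/HP.
Qed.

Lemma H_count d n : alt_lyndon d -> H d n = count (adm d) (W (d 1).+1 n).
Proof.
move=> hd; rewrite /H -card_count; apply: eq_card => t; rewrite !inE.
apply: asboolE; split; first exact: inL_adm.
move=> Ha; apply: adm_inL => //.
by apply/allP => a /mapP [b _ ->]; rewrite -ltnS ltn_ord.
Qed.

Lemma memW k l w : w \in W k l -> (size w == l) && all (fun a => a < k) w.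
Proof.
elim: l w => [|l IH] w /=; first by rewrite inE => /eqP ->.
case/flattenP => s /mapP [a Ha ->] /mapP [v Hv ->] /=.
rewrite mem_iota in Ha; case/andP: (IH v Hv) => /eqP -> -> /=.
by rewrite eqxx andbT; lia.
Qed.

Lemma count_pred1W k l s : size s = l -> all (fun a => a < k) s ->
  count (pred1 s) (W k l) = 1.
Proof.
elim: l s => [|l IH] [|b s] //= [] Hs /andP [Hb Hall].
rewrite countW (bigD1 (Ordinal Hb)) //= big1.
- rewrite addn0 -(IH s Hs Hall); apply: eq_count => w /=.
  by rewrite eqseq_cons eqxx.
- move=> i Hi; apply/eqP; rewrite -leqn0 leqNgt -has_count; apply/hasP.
  case=> w _ /=; rewrite eqseq_cons => /andP [/eqP Hib _].
  move: Hi => /negP; apply; apply/eqP; apply: val_inj => /=; exact Hib.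
Qed.

Lemma count_split (T : Type) (a b : pred T) s :
  count a s = count (fun x => a x && b x) s + count (fun x => a x && ~~ b x) s.
Proof.
elim: s => //= x s ->; case: (a x); case: (b x) => /=; lia.
Qed.

Lemma sum_le (k c m : nat) : m < k -> \sum_(a < k) (if a <= m then c else 0) = m.+1 * c.
Proof.
move=> Hm.
rewrite -(big_mkord xpredT (fun a => if a <= m then c else 0)).
rewrite (big_cat_nat _ (n:=m.+1)) //=.
rewrite big_nat_cond (eq_bigr (fun _ => c)); last first.
  by move=> i /andP [/andP [_ Hi] _]; rewrite ifT //; lia.
rewrite -big_nat_cond sum_nat_const_nat subn0.
rewrite big_nat_cond big1 ?addn0 //.
by move=> i /andP [/andP [Hi _] _]; rewrite ifF //; lia.
Qed.

Lemma sum_eq (k c m : nat) : m < k -> \sum_(a < k) (if val a == m then c else 0) = c.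
Proof.
move=> Hm; rewrite (bigD1 (Ordinal Hm)) //= eqxx big1 ?addn0 //.
move=> i Hi; case: eqP => // He; exfalso; move: Hi => /negP; apply.
by apply/eqP; apply: val_inj.
Qed.
Definition Hc d l := count (adm d) (W (d 1).+1 l).
Definition Zc d l j := count (fun w => adm d w && altc true (seg d j l) w) (W (d 1).+1 l).

Lemma altc_false x y : altc false x y = altc true y x.
Proof. exact: (altc_flip true). Qed.

Section Main.
Variable d : nat -> nat.
Hypothesis hd : alt_lyndon d.

Lemma fac_all j l : 0 < j -> all (fun a => a < (d 1).+1) (seg d j l).
Proof.
elim: l j => //= l IH j Hj; rewrite IH // andbT ltnS; exact: dle.
Qed.

Lemma count_fac j l : 0 < j ->
  count (fun w => adm d w && (w == seg d j l)) (W (d 1).+1 l) = 1.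
Proof.
move=> Hj; rewrite -[RHS](count_pred1W _ _ _ (size_seg d j l) (fac_all j l Hj)).
apply: eq_count => w /=; case: eqP => [->|_]; last by rewrite andbF.
by rewrite andbT adm_fac.
Qed.

Lemma step_lt j l a w : 0 < j -> size w = l -> a < d j ->
  adm d (a :: w) && altc true (seg d j l.+1) (a :: w) = adm d w.
Proof.
move=> Hj Hs Ha /=.
have Hd := dle d hd j Hj.
rewrite ifF; last by apply/negbTE; rewrite neq_ltn; lia.
rewrite ifF; last by apply/negbTE; rewrite neq_ltn; lia.
rewrite Ha andbT.
have -> : (d 1 < a) = false by apply/negbTE; lia.
by rewrite andbT.
Qed.

Lemma step_gt j l a w : d j < a ->
  adm d (a :: w) && altc true (seg d j l.+1) (a :: w) = false.
Proof.
move=> Ha /=.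
have -> : (d j == a) = false by apply/negbTE; rewrite neq_ltn; lia.
have -> : (a < d j) = false by apply/negbTE; lia.
by rewrite andbF.
Qed.

Lemma step_eq j l w : 0 < j -> size w = l ->
  adm d (d j :: w) && altc true (seg d j l.+1) (d j :: w) =
  adm d w && altc true w (seg d j.+1 l).
Proof.
move=> Hj Hs /=; rewrite eqxx !altc_false Hs.
case: eqP => Hd1.
- case Hw: (altc true w (seg d j.+1 l)); last by rewrite !andbF.
  rewrite !andbT; case: (adm d w) => //=; apply/negP => H2.
  have H3 := altc_trans _ _ _ _ H2 Hw.
  have := lyn_fin d hd j l.+1 Hj; rewrite /= Hd1 eqxx altc_false.
  by rewrite H3.
- have := dle d hd j Hj => Hd.
  have -> : (d 1 < d j) = false by apply/negbTE; lia.
  by rewrite andbT.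
Qed.

Lemma Zrec j l : 0 < j -> Zc d l.+1 j + (Zc d l j.+1 + 1) = (d j).+1 * Hc d l.
Proof.
move=> Hj.
have Hdj : d j < (d 1).+1 by rewrite ltnS; exact: dle.
rewrite /Zc countW -(sum_eq _ (Zc d l j.+1 + 1) _ Hdj) -big_split /=.
rewrite -(sum_le _ (Hc d l) _ Hdj); apply: eq_bigr => a _.
have : a < d j \/ d j < a \/ nat_of_ord a = d j by lia.
case=> [Ha|[Ha|Ha]].
- rewrite ifF; last by apply/negbTE; rewrite neq_ltn Ha.
  rewrite ifT; last by lia.
  rewrite addn0 /Hc; apply: eq_in_count => w /memW /andP [/eqP Hs _].
  exact: step_lt.
- rewrite ifF; last by apply/negbTE; rewrite neq_ltn Ha orbT.
  rewrite ifF; last by lia.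
  rewrite addn0 (eq_count (a2 := pred0)); first by rewrite count_pred0.
  by move=> w; rewrite /= step_gt.
- rewrite Ha eqxx leqnn /Hc [RHS](count_split _ _ (fun w => altc true w (seg d j.+1 l))).
  congr addn.
  + apply: eq_in_count => w /memW /andP [/eqP Hs _]; have := step_eq j l w Hj Hs; rewrite /= eqxx => <-; done.
  + rewrite [RHS](count_split _ _ (fun w => w == seg d j.+1 l)) [RHS]addnC; congr addn.
    * rewrite /Zc; apply: eq_in_count => w /memW /andP [/eqP Hs _] /=.
      have := altc_tri true w (seg d j.+1 l); rewrite size_seg => /(_ Hs).
      set S := seg d j.+1 l.
      case: eqP => [->|_] Htri; first by rewrite altc_irr !andbF.
      move: Htri; rewrite orbF andbT.
      case E1: (altc true w S); case E2: (altc true S w) => //= _; rewrite ?andbT ?andbF //.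
      by have := altc_trans _ _ _ _ E1 E2; rewrite altc_irr.
    * symmetry; rewrite -[RHS](count_fac j.+1 l) //; apply: eq_count => w /=.
      case: eqP => [->|_]; last by rewrite !andbF.
      by rewrite altc_irr /= !andbT.
Qed.

Lemma Z0 j : Zc d 0 j = 0.
Proof. by []. Qed.

Lemma HZ l : Hc d l = Zc d l 1 + 1.
Proof.
rewrite /Hc /Zc (count_split _ _ (fun w => altc true (seg d 1 l) w)); congr addn.
rewrite -[RHS](count_fac 1 l) //; apply: eq_in_count => w /memW /andP [/eqP Hs _] /=.
case Ha: (adm d w) => //=.
have := adm_head d w Ha; rewrite Hs => Hh.
have := altc_tri true w (seg d 1 l); rewrite size_seg => /(_ Hs).
case: eqP => [->|_]; first by rewrite altc_irr.
by rewrite (negbTE Hh) orbF /= => ->.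
Qed.

End Main.
From mathcomp Require Import ring.
Local Open Scope ring_scope.

Section Alg.
Variable d : nat -> nat.
Hypothesis hd : alt_lyndon d.

Definition h m : int := (Hc d m)%:Z.
Definition Bs (m j : nat) : int :=
  \sum_(i < m) (-1) ^+ i * (d (j + i))%:Z * h (m - 1 - i).
Definition Aa (m : nat) : int := \sum_(i < m) (-1) ^+ i * (h (m - 1 - i) - 1).

Lemma BsS m j : Bs m.+1 j = (d j)%:Z * h m - Bs m j.+1.
Proof.
rewrite /Bs big_ord_recl /= expr0 mul1r addn0 subn0 subn1 /=.
rewrite /Bs /Aa -sumrN; congr (_ + _).
apply: eq_bigr => i _; rewrite exprS /bump /= add1n addnS -addSn.
have -> : (m - i.+1 = m - 1 - i)%N by lia.
ring.
Qed.

Lemma AaS m : Aa m.+1 = (h m - 1) - Aa m.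
Proof.
rewrite /Aa big_ord_recl /= expr0 mul1r subn0 subn1 /=.
rewrite /Bs /Aa -sumrN; congr (_ + _).
apply: eq_bigr => i _; rewrite exprS /bump /= add1n.
have -> : (m - i.+1 = m - 1 - i)%N by lia.
ring.
Qed.

Lemma Zclosed l j : (0 < j)%N -> (Zc d l j)%:Z = Bs l j + Aa l.
Proof.
elim: l j => [|l IH] j Hj; first by rewrite /Bs /Aa !big_ord0.
have E := Zrec d hd j l Hj.
have E' : (Zc d l.+1 j)%:Z = ((d j).+1 * Hc d l)%:Z - (Zc d l j.+1)%:Z - 1.
  by rewrite -E !PoszD; ring.
rewrite E' IH // BsS AaS PoszM /h; ring.
Qed.

Lemma h0 : h 0 = 1.
Proof. by []. Qed.

Lemma hB m : h m - 1 = Bs m 1 + Aa m.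
Proof. by rewrite /h (HZ d hd) PoszD Zclosed //; ring. Qed.

Lemma AaB m : Aa m.+1 = Bs m 1.
Proof.
elim: m => [|m IH]; first by rewrite AaS h0 /Aa big_ord0 /Bs big_ord0; ring.
by rewrite AaS hB IH; ring.
Qed.

Lemma hrec n : h n.+1 = Bs n.+1 1 + Bs n 1 + 1.
Proof. have := hB n.+1; rewrite AaB => E; rewrite -E; ring. Qed.

End Alg.
Theorem proposition1 (d : nat -> nat) (hd : alt_lyndon d) :
  H d 0 = 1%N /\
  forall n : nat, (0 < n)%N ->
    (H d n)%:Z =
      \sum_(1 <= k < n.+1)
         (-1) ^+ k * ((dz d k.-1)%:Z - (dz d k)%:Z) * (H d (n - k))%:Z + 1.
Proof.
split; first by rewrite H_count.
case=> // n _.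
have HH : forall m, (H d m)%:Z = h d m by move=> m; rewrite H_count.
rewrite HH hrec //; congr (_ + _).
rewrite big_add1 /= big_mkord.
transitivity (\sum_(i < n.+1) ((-1) ^+ i * (d (1 + i)%N)%:Z * h d (n.+1 - 1 - i)
   + (-1) ^+ i.+1 * (dz d i)%:Z * h d (n.+1 - i.+1))).
  rewrite big_split /=; congr (_ + _).
  rewrite big_ord_recl /= mulr0 mul0r add0r.
  apply: eq_bigr => i _; rewrite /bump /= add1n.
  have -> : (n.+1 - i.+2 = n - 1 - i)%N by lia.
  by rewrite !exprS !mulN1r opprK.
apply: eq_bigr => i _; rewrite HH /=.
have -> : (n.+1 - 1 - i = n.+1 - i.+1)%N by lia.
rewrite add1n exprS; ring.
Qed.
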